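(* Let $m\ge 2$. Let $H_1$ be the graph with vertices $v_1,\dots,v_5$ and edges $v_1v_2,v_2v_3,v_3v_4,v_4v_5,v_5v_1,v_2v_4,v_3v_5$ (it has exactly one vertex of degree $2$, namely $v_1$), and let $H_2$ be the graph with vertices $v_1,\dots,v_6$ and edges $v_1v_2,v_2v_3,v_3v_4,v_4v_5,v_5v_6,v_6v_1,v_2v_5,v_3v_6$ (it has exactly two vertices of degree $2$, namely $v_1,v_4$). Let $G$ be the cubic graph constructed from the path $P_m$ by replacing each leaf with a copy of $H_1$ and each internal vertex with a copy of $H_2$, where each edge $uv$ of $P_m$ is replaced by an edge joining a degree-$2$ vertex of the copy for $u$ to a degree-$2$ vertex of the copy for $v$, each degree-$2$ vertex being used exactly once. Then (a) $G$ is a bridged, Class $2$ cubic graph with triangles, and (b) $c_2(G)-\left\lceil\frac{|V(G)|+2}{4}\right\rceil=\left\lfloor\frac{m}{2}\right\rfloor$.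
   Context: A graph is bridged if it has a bridge (an edge whose removal increases the number of components). A graph of maximum degree $\Delta$ is Class $1$ if its chromatic index is $\Delta$ and Class $2$ if it is $\Delta+1$. For a graph $G=(V,E)$ and $S_0\subseteq V$, the irreversible $2$-threshold conversion process sets, for $t=1,2,\dots$, $S_t=S_{t-1}\cup\{v: v \text{ has at least } 2 \text{ neighbours in } S_{t-1}\}$; $S_0$ is a $2$-conversion set if $S_t=V$ for some $t$, and $c_2(G)$ is the minimum size of a $2$-conversion set. *)

(* Defs.v *)
From HB Require Import structures.
From mathcomp Require Import all_boot all_order all_algebra.
Set Implicit Arguments. Unset Strict Implicit. Unset Printing Implicit Defensive.

Section Graphs.
Variable T : finType.
Variable e : rel T.

Definition simple_graph : Prop := symmetric e /\ irreflexive e.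

Definition deg (x : T) : nat := #|[set y | e x y]|.

Definition maxdeg : nat := \max_(x : T) deg x.

Definition cubic : Prop := forall x, deg x = 3.

Definition has_triangle : Prop := exists x y z, [&& e x y, e y z & e z x].

Definition ncomp (f : rel T) : nat := n_comp (connect f) (fun _ => true).

Definition remove_edge (x y : T) : rel T :=
  fun u v => e u v && ~~ (((u == x) && (v == y)) || ((u == y) && (v == x))).

Definition is_bridge (x y : T) : Prop :=
  e x y /\ ncomp e < ncomp (remove_edge x y).

Definition bridged : Prop := exists x y, is_bridge x y.

Definition edge_colouring (k : nat) (c : T -> T -> 'I_k) : Prop :=
  (forall x y, e x y -> c x y = c y x) /\
  (forall x y z, e x y -> e x z -> y != z -> c x y != c x z).

Definition edge_colourable (k : nat) : Prop := exists c, @edge_colouring k c.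

Definition is_chromatic_index (k : nat) : Prop :=
  edge_colourable k /\ forall j, edge_colourable j -> k <= j.

Definition class1 : Prop := is_chromatic_index maxdeg.
Definition class2 : Prop := is_chromatic_index maxdeg.+1.

Definition conv_step (S : {set T}) : {set T} :=
  S :|: [set v | 2 <= #|[set u in S | e v u]|].

Definition conv_set (S0 : {set T}) : Prop := exists t, iter t conv_step S0 = setT.

Definition is_c2 (k : nat) : Prop :=
  (exists S0 : {set T}, conv_set S0 /\ #|S0| = k) /\
  (forall S0 : {set T}, conv_set S0 -> k <= #|S0|).

End Graphs.

Unset Implicit Arguments.

(* H1 on vertices 0..4 (v1..v5), H2 on vertices 0..5 (v1..v6) *)
Definition H1_edges : seq (nat * nat) :=
  [:: (0,1); (1,2); (2,3); (3,4); (4,0); (1,3); (2,4)]%N.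
Definition H2_edges : seq (nat * nat) :=
  [:: (0,1); (1,2); (2,3); (3,4); (4,5); (5,0); (1,4); (2,5)]%N.

Definition in_edges (s : seq (nat * nat)) (a b : nat) : bool :=
  ((a, b) \in s) || ((b, a) \in s).

Definition path_internal (m i : nat) : bool := (0 < i) && (i < m.-1).

(* copy of vertex i: H2 if internal, H1 if a leaf;  vertex (i, a) = v_{a+1} of that copy *)
Definition Gvalid (m : nat) (p : 'I_m * 'I_6) : bool := path_internal m p.1 || (p.2 < 5).

Definition GV (m : nat) := {p : 'I_m * 'I_6 | Gvalid m p}.
HB.instance Definition _ (m : nat) := Finite.on (GV m).

(* degree-2 vertex of copy i used for the path edge i(i+1):
   v1 (index 0) for a leaf, v4 (index 3) for an internal vertex;
   the path edge i(i+1) lands on v1 (index 0) of copy i+1. *)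
Definition port (m i : nat) : nat := if path_internal m i then 3 else 0.

Definition pedge (m : nat) (p q : 'I_m * 'I_6) : bool :=
  [|| (p.1 == q.1) &&
        (if path_internal m p.1 then in_edges H2_edges p.2 q.2 else in_edges H1_edges p.2 q.2),
      [&& q.1 == p.1.+1 :> nat, p.2 == port m p.1 :> nat & q.2 == 0 :> nat]
    | [&& p.1 == q.1.+1 :> nat, q.2 == port m q.1 :> nat & p.2 == 0 :> nat]].

Definition Gadj (m : nat) : rel (GV m) := fun x y => pedge m (val x) (val y).

Definition ceil_div (a b : nat) : nat := (a + b.-1) %/ b.

(* Main.v *)
Require Import Defs.
From HB Require Import structures.
From mathcomp Require Import all_boot all_order all_algebra zify.
Set Implicit Arguments. Unset Strict Implicit. Unset Printing Implicit Defensive.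

Definition ladj (k : bool) (a b : 'I_6) : bool :=
  if k then in_edges H2_edges a b else in_edges H1_edges a b.
Definition lvalid (k : bool) (b : 'I_6) : bool := k || (b < 5).
Definition hp (k : bool) (a : 'I_6) : bool := (a == 0 :> nat) || (k && (a == 3 :> nat)).
Definition o6 : seq 'I_6 := [:: @Ordinal 6 0 isT; @Ordinal 6 1 isT; @Ordinal 6 2 isT; @Ordinal 6 3 isT; @Ordinal 6 4 isT; @Ordinal 6 5 isT].
Lemma mem_o6 (a : 'I_6) : a \in o6.
Proof. by case: a => [[|[|[|[|[|[|?]]]]]] H]. Qed.
Lemma o6_uniq : uniq o6. Proof. by []. Qed.

Lemma ldeg_b : all (fun k => all (fun a => lvalid k a ==> (count (fun c => lvalid k c && ladj k a c) o6 + hp k a == 3)) o6) [:: true; false].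
Proof. vm_compute. reflexivity. Qed.

Definition mat (f : 'I_6 -> bool) : 'I_6 -> bool :=
  let l := [seq f b | b <- o6] in fun b => nth false l b.
Definition lstep (k ext : bool) (A : 'I_6 -> bool) : 'I_6 -> bool :=
  mat (fun b => A b || (lvalid k b && (2 <= count (fun c => A c && ladj k b c) o6 + (ext && hp k b)))).

Definition S13 (b : 'I_6) : bool := (b == 1 :> nat) || (b == 3 :> nat).
Lemma up_local_b : all (fun k => all (fun b => lvalid k b ==> iter 4 (lstep k false) S13 b) o6) [:: true; false].
Proof. vm_compute. reflexivity. Qed.

Definition cl k A := iter 6 (lstep k true) A.
Lemma low_local_b : all (fun k => all (fun x => 
   all (fun b => lstep k true (cl k (fun c => c == x)) b ==> cl k (fun c => c == x) b) o6 &&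
   has (fun b => lvalid k b && ~~ cl k (fun c => c == x) b) o6) o6) [:: true; false].
Proof. vm_compute. reflexivity. Qed.
Lemma low_local_b0 : all (fun k => 
   all (fun b => lstep k true (cl k (fun c => false)) b ==> cl k (fun c => false) b) o6 &&
   has (fun b => lvalid k b && ~~ cl k (fun c => false) b) o6) [:: true; false].
Proof. vm_compute. reflexivity. Qed.

Lemma card6 (P : pred 'I_6) : #|[set c | P c]| = count P o6.
Proof.
rewrite cardsE cardE /enum_mem size_filter -enumT.
apply/(permP (uniq_perm (enum_uniq _) o6_uniq _)) => x.
by rewrite mem_enum mem_o6.
Qed.


Lemma mat_E f (b : 'I_6) : mat f b = f b.
Proof. by case: b => [[|[|[|[|[|[|?]]]]]] H] //=; congr f; apply: val_inj. Qed.

Lemma ladj_sym k a b : ladj k a b = ladj k b a.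
Proof. by rewrite /ladj /in_edges; case: k; rewrite orbC. Qed.

Lemma ladj_valid_b : all (fun k => all (fun b => all (fun c => ladj k b c ==> lvalid k c) o6) o6) [:: true; false].
Proof. vm_compute. reflexivity. Qed.

Lemma ladj_valid k b c : ladj k b c -> lvalid k c.
Proof.
have K : k \in [:: true; false] by case: k.
move/allP: ladj_valid_b => /(_ _ K) /allP /(_ _ (mem_o6 b)) /allP /(_ _ (mem_o6 c)) /implyP //.
Qed.

Definition lgrow (k : bool) (A : 'I_6 -> bool) : 'I_6 -> bool :=
  mat (fun b => A b || (lvalid k b && has (fun c => A c && ladj k b c) o6)).
Definition z0 (b : 'I_6) : bool := (b == 0 :> nat).
Lemma lgrow_b : all (fun k => all (fun b => lvalid k b ==> iter 3 (lgrow k) z0 b) o6) [:: true; false].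
Proof. vm_compute. reflexivity. Qed.

Lemma ncomp1 (T : finType) (f : rel T) x0 : symmetric f -> (forall x, connect f x0 x) -> ncomp f = 1.
Proof.
move=> sf H.
have cs : connect_sym (connect f) by apply: sym_connect_sym; apply: sym_connect_sym.
rewrite /ncomp -(n_comp_connect cs x0); apply: eq_card => z; rewrite !inE.
by rewrite (connect1 (H z)).
Qed.

Lemma ncomp2 (T : finType) (f : rel T) x y : symmetric f -> ~~ connect f x y -> 2 <= ncomp f.
Proof.
move=> sf H.
have cs : connect_sym (connect f) by apply: sym_connect_sym; apply: sym_connect_sym.
have cc : connect (connect f) x y = connect f x y.
  apply/idP/idP; last exact: connect1.
  by apply: connect_sub => a b h.
rewrite /ncomp; move: (n_comp_closure2 cs x y); rewrite cc H => <-.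
by apply: subset_leq_card; apply/subsetP => z; rewrite !inE => /andP [-> _].
Qed.

Definition lcol (k : bool) (a b : nat) : nat :=
  let E := if k then H2_edges else H1_edges in
  let C := if k then [:: 0; 1; 0; 1; 0; 1; 2; 2] else [:: 0; 1; 0; 1; 2; 2; 3] in
  if (a, b) \in E then nth 3 C (index (a, b) E) else nth 3 C (index (b, a) E).

Definition bools := [:: true; false].
Lemma mem_bools (k : bool) : k \in bools. Proof. by case: k. Qed.

Lemma col_b : all (fun k => all (fun a : 'I_6 => all (fun b : 'I_6 =>
   [&& lcol k a b < 4, ladj k a b ==> (lcol k a b == lcol k b a),
       (ladj k a b && hp k a) ==> (lcol k a b != 3) &
       all (fun c : 'I_6 => [&& ladj k a b, ladj k a c & b != c] ==> (lcol k a b != lcol k a c)) o6])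
   o6) o6) bools.
Proof. vm_compute. reflexivity. Qed.

Lemma colP k (a b : 'I_6) :
  [&& lcol k a b < 4, ladj k a b ==> (lcol k a b == lcol k b a),
       (ladj k a b && hp k a) ==> (lcol k a b != 3) &
       all (fun c => [&& ladj k a b, ladj k a c & b != c] ==> (lcol k a b != lcol k a c)) o6].
Proof.
by move/allP: col_b => /(_ _ (mem_bools k)) /allP /(_ _ (mem_o6 a)) /allP /(_ _ (mem_o6 b)).
Qed.

Definition o3 : seq 'I_3 := [:: @Ordinal 3 0 isT; @Ordinal 3 1 isT; @Ordinal 3 2 isT].
Lemma mem_o3 (a : 'I_3) : a \in o3.
Proof. by case: a => [[|[|[|?]]] H]. Qed.

Lemma no3_b : all (fun e0 => all (fun e1 => all (fun e2 => all (fun e3 =>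
  all (fun e4 => all (fun e5 => all (fun e6 => all (fun e7 =>
  ~~ [&& e0 != e1, e0 != e5, e1 != e5, e1 != e2, e1 != e6, e2 != e6, e2 != e3, e2 != e7,
        e3 != e7, e3 != e4, e3 != e6, e4 != e6, e4 != e5, e5 != e7 & e4 != e7]) o3) o3) o3) o3) o3) o3) o3) o3.
Proof. vm_compute. reflexivity. Qed.

Section G.
Variable m : nat.
Hypothesis hm : 1 < m.
Local Notation V := (GV m).
Local Notation ci u := ((val u).1).
Local Notation li u := ((val u).2).
Local Notation adj := (@Gadj m).
Definition kd (i : 'I_m) : bool := path_internal m i.

Lemma validP (u : V) : lvalid (kd (ci u)) (li u).
Proof. exact: (valP u). Qed.

Lemma V_inj (u w : V) : ci u = ci w -> li u = li w -> u = w.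
Proof.
move=> h1 h2; apply: val_inj.
by rewrite [val u]surjective_pairing [val w]surjective_pairing h1 h2.
Qed.

Definition mkV (i : 'I_m) (b : 'I_6) (h : lvalid (kd i) b) : V := exist _ (i, b) h.

Lemma kdP (i : 'I_m) : kd i = (0 < i) && (i.+1 < m).
Proof. rewrite /kd /path_internal; apply/andP/andP => [] [a b]; split => //; lia. Qed.

Lemma adj_same (u w : V) : ci u = ci w -> adj u w = ladj (kd (ci u)) (li u) (li w).
Proof.
rewrite /adj /Gadj /pedge => E; rewrite E eqxx /=.
have F (n : nat) : (n == n.+1) = false by lia.
by rewrite !F !andFb !orbF.
Qed.

Lemma adj_cross (u w : V) : ci u != ci w -> adj u w ->
  ((ci w : nat) = (ci u).+1 /\ (li u : nat) = port m (ci u) /\ (li w : nat) = 0) \/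
  ((ci u : nat) = (ci w).+1 /\ (li w : nat) = port m (ci w) /\ (li u : nat) = 0).
Proof.
rewrite /adj /Gadj /pedge => /negbTE ->; rewrite andFb /=.
by case/orP => /and3P [/eqP a /eqP b /eqP c]; [left|right].
Qed.

Lemma ext_hp (u w : V) : adj u w -> ci u != ci w -> hp (kd (ci u)) (li u).
Proof.
move=> h n; case: (adj_cross n h) => [[_ [E _]]|[_ [_ E]]];
  rewrite /hp E ?/port /kd //; by case: path_internal.
Qed.

Lemma ext_uniq (u w1 w2 : V) : adj u w1 -> adj u w2 -> ci u != ci w1 -> ci u != ci w2 -> w1 = w2.
Proof.
move=> h1 h2 n1 n2.
have L1 := ltn_ord (ci w1); have L2 := ltn_ord (ci w2); have L := ltn_ord (ci u).
case: (adj_cross n1 h1) => [[a1 [b1 c1]]|[a1 [b1 c1]]];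
case: (adj_cross n2 h2) => [[a2 [b2 c2]]|[a2 [b2 c2]]].
- by apply: V_inj; apply: ord_inj; lia.
- exfalso; have : kd (ci u) by rewrite kdP; apply/andP; split; lia.
  by move=> K; rewrite /port (_ : path_internal m _ = true) // in b1; lia.
- exfalso; have : kd (ci u) by rewrite kdP; apply/andP; split; lia.
  by move=> K; rewrite /port (_ : path_internal m _ = true) // in b2; lia.
- have E : ci w1 = ci w2 by apply: ord_inj; lia.
  by apply: V_inj => //; apply: ord_inj; rewrite b1 b2 E.
Qed.


Lemma ext_ex (u : V) : hp (kd (ci u)) (li u) -> exists w, adj u w && (ci u != ci w).
Proof.
have L := ltn_ord (ci u).
rewrite /hp; case/orP => [/eqP E0 | /andP [K /eqP E3]].
  case E : (nat_of_ord (ci u)) => [|j].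
    have h1 : 1 < m by [].
    have v0 : lvalid (kd (Ordinal h1)) (@Ordinal 6 0 isT) by rewrite /lvalid orbT.
    exists (mkV v0); rewrite /adj /Gadj /pedge /= E E0.
    by rewrite /port /path_internal /= orbT /=; apply/negP => /eqP F; rewrite F in E.
  have hj : j < m by lia.
  have hp6 : port m j < 6 by rewrite /port; case: path_internal.
  have v0 : lvalid (kd (Ordinal hj)) (Ordinal hp6) by rewrite /lvalid /port /=; case: path_internal; rewrite ?orbT.
  exists (mkV v0); rewrite /adj /Gadj /pedge /= E E0 !eqxx /=.
  rewrite !orbT /=; apply/negP => /eqP F; rewrite F /= in E; lia.
have h1 : (ci u).+1 < m by move: K; rewrite kdP => /andP[].
have v0 : lvalid (kd (Ordinal h1)) (@Ordinal 6 0 isT) by rewrite /lvalid orbT.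
exists (mkV v0); rewrite /adj /Gadj /pedge /= E3 !eqxx /=.
have -> : port m (ci u) = 3 by rewrite /port; move: K; rewrite /kd => ->.
rewrite !eqxx orbT /=; apply/negP => /eqP F; have : (ci u : nat) = (ci u).+1 by rewrite {1}F. lia.
Qed.

Definition loc (i : 'I_m) (S : {set V}) : {set 'I_6} :=
  (fun w : V => li w) @: [set w in S | ci w == i].

Lemma card_in (u : V) (S : {set V}) :
  #|[set w in S | adj u w & ci w == ci u]| = #|[set c in loc (ci u) S | ladj (kd (ci u)) (li u) c]|.
Proof.
rewrite -(@card_in_imset _ _ (fun w : V => li w)); last first.
  move=> w1 w2; rewrite !inE => /and3P [_ _ /eqP e1] /and3P [_ _ /eqP e2] e.
  by apply: V_inj => //; rewrite e1 e2.
apply: eq_card => c; apply/imsetP/idP.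
  case=> w; rewrite !inE => /and3P [wS a /eqP e] ->.
  rewrite -adj_same ?e // a andbT; apply/imsetP; exists w => //; by rewrite inE wS e eqxx.
rewrite !inE => /andP [/imsetP [w] + -> a]; rewrite inE => /andP [wS /eqP e].
by exists w => //; rewrite !inE wS /= e eqxx andbT (adj_same (esym e)).
Qed.

Lemma card_split (u : V) (S : {set V}) :
  #|[set w in S | adj u w]| =
  #|[set w in S | adj u w & ci w == ci u]| + #|[set w in S | adj u w & ci w != ci u]|.
Proof.
rewrite -(cardsID [set w | ci w == ci u] [set w in S | adj u w]).
congr (_ + _); apply: eq_card => w; rewrite !inE;
  by case: (w \in S); case: (adj u w); case: (ci w == ci u).
Qed.

Lemma card_ext_le (u : V) (S : {set V}) :
  #|[set w in S | adj u w & ci w != ci u]| <= hp (kd (ci u)) (li u).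
Proof.
set X := [set w in S | _].
case: (set_0Vmem X) => [->|[w0]]; first by rewrite cards0.
rewrite inE => /and3P [_ a0 n0].
have -> : hp (kd (ci u)) (li u) by apply: (ext_hp a0); rewrite eq_sym.
apply: (leq_trans (subset_leq_card (_ : X \subset [set w0]))); last by rewrite cards1.
apply/subsetP => w; rewrite !inE => /and3P [_ a n]; apply/eqP.
by apply: (ext_uniq a a0); rewrite eq_sym.
Qed.

Lemma card_ext_T (u : V) :
  #|[set w in [set: V] | adj u w & ci w != ci u]| = hp (kd (ci u)) (li u).
Proof.
apply/eqP; rewrite eqn_leq card_ext_le /=.
case H : (hp _ _) => //=.
have [w /andP [a n]] := ext_ex H.
by apply/card_gt0P; exists w; rewrite !inE a eq_sym n.
Qed.

Lemma loc_T (i : 'I_m) : loc i [set: V] = [set c | lvalid (kd i) c].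
Proof.
apply/setP => c; rewrite inE; apply/imsetP/idP.
  by case=> w; rewrite !inE => /eqP e ->; rewrite -e; apply: validP.
by move=> h; exists (mkV h); rewrite // !inE /=.
Qed.

Lemma cubicG : cubic (@Gadj m).
Proof.
move=> u; rewrite /deg.
have -> : #|[set y | adj u y]| = #|[set w in [set: V] | adj u w]|.
  by apply: eq_card => w; rewrite !inE.
rewrite card_split card_ext_T card_in loc_T.
have -> : #|[set c in [set c | lvalid (kd (ci u)) c] | ladj (kd (ci u)) (li u) c]| =
          count (fun c => lvalid (kd (ci u)) c && ladj (kd (ci u)) (li u) c) o6.
  by rewrite -card6; apply: eq_card => c; rewrite !inE.
have := validP u.
have K : kd (ci u) \in [:: true; false] by case: (kd _).
move/allP: ldeg_b => /(_ _ K) /allP /(_ _ (mem_o6 (li u))) /implyP H /H /eqP.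
done.
Qed.

Lemma simpleG : simple_graph (@Gadj m).
Proof.
have Sym s a b : in_edges s a b = in_edges s b a by rewrite /in_edges orbC.
split.
  move=> x y; rewrite /Gadj /pedge; congr (_ || _); last by rewrite orbC.
  rewrite eq_sym; case: eqP => //= E; rewrite E; by case: path_internal; apply: Sym.
move=> x; rewrite /Gadj /pedge.
have F (n : nat) : (n == n.+1) = false by lia.
rewrite !F /= !orbF; case: eqP => // _.
have : all (fun a : 'I_6 => ~~ in_edges H1_edges a a && ~~ in_edges H2_edges a a) o6 by [].
move/allP => /(_ _ (mem_o6 (li x))) /andP [h1 h2].
by case: path_internal; apply/negbTE.
Qed.

Lemma triG : has_triangle (@Gadj m).
Proof.
have h0 : 0 < m by lia.
have K : kd (Ordinal h0) = false by rewrite kdP.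
have v1 : lvalid (kd (Ordinal h0)) (@Ordinal 6 1 isT) by rewrite /lvalid orbT.
have v2 : lvalid (kd (Ordinal h0)) (@Ordinal 6 2 isT) by rewrite /lvalid orbT.
have v3 : lvalid (kd (Ordinal h0)) (@Ordinal 6 3 isT) by rewrite /lvalid orbT.
exists (mkV v1), (mkV v2), (mkV v3).
by rewrite /adj /Gadj /pedge /=.
Qed.

Lemma local_conn (i : 'I_m) (h0 : lvalid (kd i) (@Ordinal 6 0 isT)) n (b : 'I_6) (h : lvalid (kd i) b) :
  iter n (lgrow (kd i)) z0 b -> connect adj (mkV h0) (mkV h).
Proof.
elim: n b h => [|n IH] b h /=.
  rewrite /z0 => /eqP E; have -> : mkV h = mkV h0 by apply: V_inj => //=; apply: ord_inj.
  exact: connect0.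
rewrite /lgrow mat_E => /orP [/IH -> //| /andP [_ /hasP [c _ /andP [Hc a]]]].
have hc : lvalid (kd i) c by exact: ladj_valid a.
apply: connect_trans (IH c hc Hc) _; apply: connect1.
by rewrite adj_same //= ladj_sym.
Qed.

Lemma local_conn3 (i : 'I_m) (h0 : lvalid (kd i) (@Ordinal 6 0 isT)) (b : 'I_6) (h : lvalid (kd i) b) :
  connect adj (mkV h0) (mkV h).
Proof.
apply: (@local_conn i h0 3).
have K : kd i \in [:: true; false] by case: (kd i).
by move/allP: lgrow_b => /(_ _ K) /allP /(_ _ (mem_o6 b)) /implyP /(_ h).
Qed.

Lemma v0P (i : 'I_m) : lvalid (kd i) (@Ordinal 6 0 isT).
Proof. by rewrite /lvalid orbT. Qed.

Definition x0 : V := mkV (v0P (Ordinal (ltnW hm))).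
Definition w1 : V := mkV (v0P (Ordinal hm)).

Lemma conn_all (u : V) : connect adj x0 u.
Proof.
suff H : forall j (hj : j < m), connect adj x0 (mkV (v0P (Ordinal hj))).
  have H' : forall i : 'I_m, connect adj x0 (mkV (v0P i)) by case=> j hj; apply: H.
  apply: connect_trans (H' (ci u)) _.
  have -> : u = mkV (validP u) by apply: V_inj.
  by apply: local_conn3.
elim=> [|j IH] hj.
  by rewrite /x0; have -> : ltnW hm = hj by apply: eq_irrelevance.
have hj' : j < m by lia.
have hp6 : port m j < 6 by rewrite /port; case: path_internal.
have vp : lvalid (kd (Ordinal hj')) (Ordinal hp6) by rewrite /lvalid /port /=; case: path_internal; rewrite ?orbT.
apply: connect_trans (IH hj') _.
apply: connect_trans (local_conn3 (v0P _) vp) _.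
apply: connect1; rewrite /adj /Gadj /pedge /=.
by apply/orP; right; apply/orP; left; apply/and3P; split.
Qed.

Lemma bridgedG : bridged (@Gadj m).
Proof.
have [sG _] := simpleG.
exists x0, w1; split.
  by rewrite /Gadj /pedge /=.
have -> : ncomp (@Gadj m) = 1 by apply: (ncomp1 sG conn_all).
have sR : symmetric (remove_edge (@Gadj m) x0 w1).
  move=> x y; rewrite /remove_edge sG; congr (_ && ~~ _).
  by case: (x == x0); case: (y == w1); case: (x == w1); case: (y == x0).
apply: (ncomp2 (x := x0) (y := w1) sR).
apply/negP => C.
have cl : closed (remove_edge (@Gadj m) x0 w1) [pred u : V | ci u == 0 :> nat].
  move=> x y; rewrite !inE /remove_edge => /andP [a n].
  case: (boolP (ci x == ci y)) => [/eqP -> //| nxy].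
  have L := ltn_ord (ci x); have L' := ltn_ord (ci y).
  case: (adj_cross nxy a) => [[e1 [e2 e3]]|[e1 [e2 e3]]].
    case: (boolP (nat_of_ord (ci x) == 0)) => [/eqP E | E].
      have T : (x == x0) && (y == w1).
        apply/andP; split; apply/eqP; apply: V_inj; apply: ord_inj => //=.
          by move: e2; rewrite E /port /path_internal /=.
        by rewrite e1 E.
      by rewrite T in n.
    apply/esym/negbTE; lia.
  case: (boolP (nat_of_ord (ci y) == 0)) => [/eqP E | E].
    have T : (x == w1) && (y == x0).
      apply/andP; split; apply/eqP; apply: V_inj; apply: ord_inj => //=.
        by rewrite e1 E.
      by move: e2; rewrite E /port /path_internal /=.
    by rewrite T orbT in n.
  apply/negbTE; lia.
by have := closed_connect cl C; rewrite !inE.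
Qed.


Lemma maxdegG : maxdeg (@Gadj m) = 3.
Proof.
apply/eqP; rewrite eqn_leq; apply/andP; split.
  by apply/bigmax_leqP => x _; rewrite cubicG.
by rewrite /maxdeg -(cubicG x0); apply: leq_bigmax.
Qed.

Definition col4 (x y : V) : 'I_4 :=
  if ci x == ci y then inord (lcol (kd (ci x)) (li x) (li y)) else inord 3.

Lemma inord_neq a b : a < 4 -> b < 4 -> a != b -> (inord a : 'I_4) != inord b.
Proof.
move=> ha hb; apply: contra => /eqP H; have := congr1 (@nat_of_ord 4) H.
by rewrite !inordK // => ->.
Qed.

Lemma col4P : edge_colouring (@Gadj m) col4.
Proof.
split.
  move=> x y a; rewrite /col4.
  case: (boolP (ci x == ci y)) => [/eqP E | n]; last first.
    by case: eqP => // E; rewrite E eqxx in n.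
  have L : ladj (kd (ci x)) (li x) (li y) by rewrite -adj_same.
  have := colP (kd (ci x)) (li x) (li y); rewrite L /= => /and4P [_ /eqP H _ _].
  rewrite H -E; by case: eqP.
move=> x y z a1 a2 nyz; rewrite /col4.
have L3 : (3 < 4) by [].
case: (boolP (ci x == ci y)) => [/eqP E1|n1]; case: (boolP (ci x == ci z)) => [/eqP E2|n2].
- have nb : li y != li z.
    by apply: contra nyz => /eqP e; apply/eqP; apply: V_inj => //; rewrite -E1 -E2.
  have := colP (kd (ci x)) (li x) (li y) => /and4P [l1 _ _ /allP /(_ (li z) (mem_o6 _))].
  have := colP (kd (ci x)) (li x) (li z) => /and4P [l2 _ _ _].
  rewrite -!adj_same // a1 a2 nb /= => H.
  by apply: inord_neq.
- have := colP (kd (ci x)) (li x) (li y) => /and4P [l1 _ + _].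
  have h : hp (kd (ci x)) (li x) by apply: (ext_hp a2).
  rewrite -adj_same // a1 h /= => H.
  by apply: inord_neq.
- have := colP (kd (ci x)) (li x) (li z) => /and4P [l1 _ + _].
  have h : hp (kd (ci x)) (li x) by apply: (ext_hp a1).
  rewrite -adj_same // a2 h /= => H.
  by apply: inord_neq => //; rewrite eq_sym.
- by rewrite (ext_uniq a1 a2 n1 n2) eqxx in nyz.
Qed.

Lemma no_col3 j (c : V -> V -> 'I_j) : j <= 3 -> edge_colouring (@Gadj m) c -> False.
Proof.
move=> hj [cs cp].
pose c' x y : 'I_3 := widen_ord hj (c x y).
have S x y : adj x y -> c' x y = c' y x by move=> a; rewrite /c' (cs x y a).
have P x y z : adj x y -> adj x z -> y != z -> c' x y != c' x z.
  move=> a1 a2 n; have := cp x y z a1 a2 n; apply: contra => /eqP H.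
  by apply/eqP/ord_inj; have := congr1 val H.
pose i0 : 'I_m := Ordinal (ltnW hm).
have v (b : 'I_6) : b < 5 -> lvalid (kd i0) b by move=> hb; rewrite /lvalid hb orbT.
pose y1 := mkV (v (@Ordinal 6 1 isT) isT).
pose y2 := mkV (v (@Ordinal 6 2 isT) isT).
pose y3 := mkV (v (@Ordinal 6 3 isT) isT).
pose y4 := mkV (v (@Ordinal 6 4 isT) isT).
move/allP: no3_b => /(_ (c' x0 w1) (mem_o3 _)) /allP /(_ (c' x0 y1) (mem_o3 _))
  /allP /(_ (c' y1 y2) (mem_o3 _)) /allP /(_ (c' y2 y3) (mem_o3 _))
  /allP /(_ (c' y3 y4) (mem_o3 _)) /allP /(_ (c' x0 y4) (mem_o3 _))
  /allP /(_ (c' y1 y3) (mem_o3 _)) /allP /(_ (c' y2 y4) (mem_o3 _)) /negP; apply.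
rewrite (P x0 w1 y1) // (P x0 w1 y4) // (P x0 y1 y4) //.
rewrite (S x0 y1) // (P y1 x0 y2) // (P y1 x0 y3) // (P y1 y2 y3) //.
rewrite (S y1 y2) // (P y2 y1 y3) // (P y2 y1 y4) // (P y2 y3 y4) //.
rewrite (S y2 y3) // (P y3 y2 y4) // (S y1 y3) // (P y3 y2 y1) // (P y3 y4 y1) //.
rewrite (S y3 y4) // (S x0 y4) // (P y4 y3 x0) // (S y2 y4) // (P y4 x0 y2) // (P y4 y3 y2) //.
Qed.

Lemma class2G : class2 (@Gadj m).
Proof.
rewrite /class2 maxdegG; split; first by exists col4; apply: col4P.
move=> j [c hc]; rewrite leqNgt; apply/negP => hj.
by apply: (no_col3 (j := j) (c := c)).
Qed.

Lemma card_sum (S : {set V}) : #|S| = \sum_(i < m) #|loc i S|.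
Proof.
rewrite -sum1_card (partition_big (fun w : V => ci w) xpredT) //=.
apply: eq_bigr => i _.
rewrite /loc card_in_imset; last first.
  move=> w1 w2; rewrite !inE => /andP [_ /eqP e1] /andP [_ /eqP e2] e.
  by apply: V_inj => //; rewrite e1 e2.
rewrite -sum1_card; apply: eq_bigl => w; by rewrite !inE.
Qed.

Lemma loc_P (P : pred 'I_6) (i : 'I_m) :
  loc i [set u : V | P (li u)] = [set c | lvalid (kd i) c && P c].
Proof.
apply/setP => c; rewrite inE; apply/imsetP/idP.
  by case=> w; rewrite !inE => /andP [Pw /eqP e] ->; rewrite Pw -e validP.
by case/andP => h Pc; exists (mkV h); rewrite // !inE /= Pc eqxx.
Qed.

Lemma cardV : #|[set: V]| = (6 * m - 2)%N.
Proof.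
have -> : [set: V] = [set u : V | predT (li u)] by apply/setP => u; rewrite !inE.
rewrite card_sum.
have E (i : 'I_m) : #|loc i [set u : V | predT (li u)]| = 5 + kd i.
  by rewrite loc_P card6; case: (kd i).
rewrite (eq_bigr _ (fun i _ => E i)).
rewrite big_split /= sum_nat_const card_ord.
rewrite -(big_mkord xpredT (fun i => nat_of_bool (path_internal m i))).
case: m hm => [|[|n]] // _.
rewrite big_ltn // big_nat_recr //=.
rewrite (eq_big_nat _ _ (F2 := fun _ => 1)); last first.
  move=> i /andP [a b]; rewrite /path_internal a /=; lia.
rewrite sum_nat_const_nat /path_internal /=.
have -> : (n.+1 < n.+1) = false by lia.
lia.
Qed.

Definition S0 : {set V} := [set u : V | S13 (li u)].

Lemma cardS0 : #|S0| = (2 * m)%N.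
Proof.
rewrite card_sum.
have E (i : 'I_m) : #|loc i S0| = 2.
  by rewrite /S0 loc_P card6; case: (kd i).
by rewrite (eq_bigr _ (fun i _ => E i)) sum_nat_const card_ord mulnC.
Qed.

Lemma conv_sub (S : {set V}) : S \subset conv_step (@Gadj m) S.
Proof. by apply/subsetP => u uS; rewrite /conv_step inE uS. Qed.

Lemma in_count (u : V) (S : {set V}) (A : pred 'I_6) :
  (forall c, A c -> ladj (kd (ci u)) (li u) c -> c \in loc (ci u) S) ->
  count (fun c => A c && ladj (kd (ci u)) (li u) c) o6 <= #|[set w in S | adj u w]|.
Proof.
move=> H; rewrite card_split card_in -card6.
apply: leq_trans (leq_addr _ _).
apply: subset_leq_card; apply/subsetP => c; rewrite !inE /= => /andP [Ac L].
by rewrite L andbT (H c Ac L).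
Qed.

Lemma up_conv n (u : V) :
  iter n (lstep (kd (ci u)) false) S13 (li u) -> u \in iter n (conv_step (@Gadj m)) S0.
Proof.
elim: n u => [|n IH] u /=; first by rewrite /S0 inE.
rewrite /lstep mat_E => /orP [/IH H| /andP [_ Hc]].
  by apply: (subsetP (conv_sub _)).
rewrite /conv_step inE; apply/orP; right; rewrite inE.
rewrite addn0 in Hc; apply: leq_trans Hc _.
apply: in_count => c Ac a.
have hc : lvalid (kd (ci u)) c by exact: ladj_valid a.
apply/imsetP; exists (mkV hc) => //.
by rewrite inE (IH (mkV hc)) //= eqxx.
Qed.

Lemma conv_S0 : conv_set (@Gadj m) S0.
Proof.
exists 4; apply/setP => u; rewrite in_setT; apply: up_conv.
by move/allP: up_local_b => /(_ _ (mem_bools (kd (ci u)))) /allP /(_ _ (mem_o6 (li u))) /implyP /(_ (validP u)).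
Qed.

Lemma iter_lstep_mono k e n (A : 'I_6 -> bool) b : A b -> iter n (lstep k e) A b.
Proof. by elim: n => //= n IH Ab; rewrite /lstep mat_E IH. Qed.

Lemma low_inv (i : 'I_m) (S : {set V}) (P : pred 'I_6) :
  (forall c, c \in loc i S -> P c) ->
  (forall b, lstep (kd i) true P b -> P b) ->
  forall n (u : V), ci u = i -> u \in iter n (conv_step (@Gadj m)) S -> P (li u).
Proof.
move=> H0 Hcl; elim=> [|n IH] u e /=.
  by move=> uS; apply: H0; apply/imsetP; exists u; rewrite // inE uS e eqxx.
rewrite /conv_step inE => /orP [/IH -> //| ]; rewrite inE => H2.
apply: Hcl; rewrite /lstep mat_E; apply/orP; right.
rewrite -e validP !andTb; apply: leq_trans H2 _.
rewrite card_split card_in; apply: leq_add; last exact: card_ext_le.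
rewrite -card6; apply: subset_leq_card; apply/subsetP => c; rewrite !inE /= => /andP [L ->].
rewrite andbT; move/imsetP: L => [w]; rewrite inE => /andP [wS /eqP ew] ->.
by apply: IH; rewrite // ew.
Qed.

Lemma low_copy (S : {set V}) (i : 'I_m) : conv_set (@Gadj m) S -> 2 <= #|loc i S|.
Proof.
move=> [t Ht]; rewrite leqNgt; apply/negP => H1.
have K := mem_bools (kd i).
have Fin : forall P : pred 'I_6, (forall c, c \in loc i S -> P c) ->
    (forall b, lstep (kd i) true P b -> P b) -> has (fun b => lvalid (kd i) b && ~~ P b) o6 -> False.
  move=> P HP Hcl /hasP [b _ /andP [vb nPb]].
  have := low_inv HP Hcl (n := t) (u := mkV vb) erefl; rewrite Ht in_setT /= => /(_ isT).
  by rewrite (negbTE nPb).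
case: (set_0Vmem (loc i S)) => [E0 | [x xA]].
  move/allP: low_local_b0 => /(_ _ K) /andP [/allP C1 C2].
  apply: (Fin _ _ _ C2).
    by move=> c; rewrite E0 inE.
  by move=> b; move/implyP: (C1 b (mem_o6 b)).
move/allP: low_local_b => /(_ _ K) /allP /(_ _ (mem_o6 x)) /andP [/allP C1 C2].
apply: (Fin _ _ _ C2).
  move=> c cA; apply: iter_lstep_mono.
  have Hx : (c \in loc i S) = (c == x) by move/card_le1P: H1 => /(_ x xA c).
  by rewrite /= -Hx.
by move=> b; move/implyP: (C1 b (mem_o6 b)).
Qed.

Lemma low_bound (S : {set V}) : conv_set (@Gadj m) S -> (2 * m <= #|S|)%N.
Proof.
move=> H; rewrite card_sum.
have : \sum_(i < m) 2 <= \sum_(i < m) #|loc i S| by apply: leq_sum => i _; apply: low_copy.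
by rewrite sum_nat_const card_ord mulnC.
Qed.

End G.

Import GRing.Theory.

Theorem proposition5p6 (m : nat) (hm : 2 <= m) :
  (simple_graph (@Gadj m) /\ cubic (@Gadj m) /\ bridged (@Gadj m) /\
   class2 (@Gadj m) /\ has_triangle (@Gadj m)) /\
  (exists k : nat, is_c2 (@Gadj m) k /\
     (k%:Z - (ceil_div (#|{: GV m}| + 2) 4)%:Z = (m %/ 2)%:Z)%R).
Proof.
split.
  split; first exact: simpleG.
  split; first exact: cubicG.
  split; first exact: bridgedG.
  split; first exact: class2G.
  exact: triG.
exists (2 * m)%N; split.
  split; first by exists (S0 m); split; [exact: conv_S0 | exact: cardS0].
  by move=> S hS; apply: low_bound.
rewrite -cardsT (cardV hm).
have E : (2 * m = ceil_div (6 * m - 2 + 2) 4 + m %/ 2)%N by rewrite /ceil_div; lia.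
by rewrite {1}E PoszD addrC addKr.
Qed.
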